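(* For $s \in J$ and $f \in Y$, the stochastic process $(V(s,t)f)_{t \in J(s)}$ is adapted to the augmented filtration \[ \mathcal{F}_t(s):=\sigma \left[x_{n \wedge N_s(t)}(s), T_{n \wedge N_s(t)}(s) : n \in \mathbb{N} \right] \vee \sigma(\mathbb{P}\text{-null sets}), \qquad t\in J(s), \] i.e. $V(s,t)f$ is $\mathcal F_t(s)$–Borel$(Y)$ measurable for every $t\in J(s)$.
   Context: $(Y,\|\cdot\|)$ is a real separable Banach space with Borel $\sigma$-algebra $\mathcal Y$; $J$ is $\mathbb{R}^+$ or $[0,T_\infty]$, $\Delta_J=\{(s,t)\in J^2:s\le t\}$, $J(s)=\{t\in J:t\ge s\}$. An inhomogeneous $Y$-semigroup is a map $\Gamma:\Delta_J\to\mathcal B(Y)$ with $\Gamma(t,t)=I$ and $\Gamma(s,r)\Gamma(r,t)=\Gamma(s,t)$ for $s\le r\le t$. Let $(\Omega,\mathcal F,\mathbb P)$ be a complete probability space, $X$ a finite set with $\sigma$-algebra $\mathcal X$ of all subsets, $(x_n)_{n\ge0}$ $X$-valued and $(\tau_n)_{n\ge1}$ $(0,\infty)$-valued random variables, $\tau_0=0$, $T_n=\sum_{k=0}^n\tau_k$, such that $(x_n,T_n)$ is a Markov renewal process: there is a semi-Markov kernel $Q$ with $\mathbb P[x_{n+1}=y,T_{n+1}-T_n\le t\mid x_k,T_k,k\le n]=Q(x_n,y,t)$ a.s. Let $N(t)=\sup\{n:T_n\le t\}$; $\Omega$ is replaced by the full-measure event $\{N(t)<\infty\ \forall t\in\mathbb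 Q\}$ (with restricted $\sigma$-algebra and probability). Set $x(t)=x_{N(t)}$, and for $s\le t$: $N_s(t)=N(t)-N(s)$, $T_0(s)=s$, $T_n(s)=T_{N(s)+n}$ for $n\ge1$, $x_n(s)=x(T_n(s))$. Let $(\Gamma_x)_{x\in X}$ be inhomogeneous $Y$-semigroups such that for each $s\in J$, $(r,t,x,f)\mapsto\Gamma_x(r\wedge t,r\vee t)f$ is $\mathrm{Bor}(J(s))\otimes\mathrm{Bor}(J(s))\otimes\mathcal X\otimes\mathcal Y$–$\mathcal Y$ measurable, and $(D(x,y))_{x,y\in X}\subseteq\mathcal B(Y)$ contractions ($\|D(x,y)\|\le1$) with $(x,y,f)\mapsto D(x,y)f$ measurable. The inhomogeneous random evolution is defined pathwise for $(s,t)\in\Delta_J$ by $V(s,t)=\Big[\prod_{k=1}^{N_s(t)}\Gamma_{x_{k-1}(s)}(T_{k-1}(s),T_k(s))D(x_{k-1}(s),x_k(s))\Big]\Gamma_{x(t)}(T_{N_s(t)}(s),t)$, where the product is ordered left to right ($\prod_{k=1}^nA_k=A_1\cdots A_n$) and the empty product is $I$. *)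

(* Defs.v *)
From HB Require Import structures.
From mathcomp Require Import all_boot all_order all_algebra.
From mathcomp Require Import all_classical all_reals all_analysis.
Import Order.TTheory GRing.Theory Num.Theory numFieldNormedType.Exports.

Set Implicit Arguments.
Unset Strict Implicit.
Unset Printing Implicit Defensive.

Local Open Scope classical_set_scope.
Local Open Scope ring_scope.

Definition borel_sets (T : topologicalType) : set (set T) :=
  <<s [set A | open A] >>.

Definition separable_space (T : topologicalType) : Prop :=
  exists D : set T, countable D /\ dense D.

Definition bounded_linear (R : realType) (Y : normedModType R) (f : Y -> Y) :=
  (forall (a : R) (u v : Y), f (a *: u + v) = a *: f u + f v) /\
  exists M : R, forall u, `|f u| <= M * `|u|.

Definition inhom_semigroup (R : realType) (Y : normedModType R) (J : set R)
    (G : R -> R -> Y -> Y) : Prop :=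
  [/\ (forall s t, J s -> J t -> s <= t -> bounded_linear (G s t)),
      (forall t, J t -> G t t = id) &
      (forall s r t, J s -> J r -> J t -> s <= r -> r <= t ->
         G s r \o G r t = G s t)].

Definition Jfrom (R : realType) (J : set R) (s : R) : set R :=
  [set t | J t /\ s <= t].

Definition semigroup_family_measurable (R : realType) (Y : normedModType R)
    (X : finType) (J : set R) (Gam : X -> R -> R -> Y -> Y) : Prop :=
  forall s, J s ->
  let Js := Jfrom J s in
  let Dom := [set z : R * R * X * Y | Js z.1.1.1 /\ Js z.1.1.2] in
  forall C, borel_sets C ->
    <<s Dom, [set A | exists (A1 A2 : set R) (S : set X) (B : set Y),
              [/\ measurable A1 /\ A1 `<=` Js, measurable A2 /\ A2 `<=` Js,
                  borel_sets B &
                  A = [set z | A1 z.1.1.1 /\ A2 z.1.1.2 /\ S z.1.2 /\ B z.2]]] >>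
      (Dom `&` [set z | C (Gam z.1.2 (Num.min z.1.1.1 z.1.1.2)
                                     (Num.max z.1.1.1 z.1.1.2) z.2)]).

Definition jump_family_measurable (R : realType) (Y : normedModType R)
    (X : finType) (Dop : X -> X -> Y -> Y) : Prop :=
  forall C, borel_sets C ->
    <<s [set A | exists (S1 S2 : set X) (B : set Y), borel_sets B /\
            A = [set z : X * X * Y | S1 z.1.1 /\ S2 z.1.2 /\ B z.2]] >>
      [set z | C (Dop z.1.1 z.1.2 z.2)].

(** T_n = sum_{k=0}^n tau_k  (with tau_0 = 0) *)
Definition Tsum (R : realType) (Omega : Type) (tau : nat -> Omega -> R)
    (n : nat) (w : Omega) : R :=
  \sum_(0 <= k < n.+1) tau k w.

Definition semi_Markov_kernel (R : realType) (X : finType) (Q : X -> X -> R -> R)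
    : Prop :=
  [/\ (forall x y t, 0 <= Q x y t),
      (forall x y, {homo Q x y : a b / a <= b}),
      (forall x y t, Q x y t' @[t' --> t^'+] --> Q x y t),
      (forall x y, Q x y 0 = 0) &
      (forall x, \sum_(y : X) Q x y t @[t --> +oo] --> (1 : R))].

Definition history_sigma (R : realType) (Omega : Type) (X : finType)
    (x : nat -> Omega -> X) (T : nat -> Omega -> R) (n : nat) : set (set Omega) :=
  <<s [set A | exists k, (k <= n)%N /\
        ((exists S : set X, A = x k @^-1` S) \/
         (exists B : set R, measurable B /\ A = T k @^-1` B))] >>.

(** P[x_{n+1} = y, T_{n+1} - T_n <= t | x_k, T_k, k <= n] = Q(x_n, y, t) a.s.,
    written in the defining form of conditional probability. *)
Definition markov_renewal (R : realType) (d : measure_display)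
    (Omega : measurableType d) (P : probability Omega R) (X : finType)
    (x : nat -> Omega -> X) (T : nat -> Omega -> R) (Q : X -> X -> R -> R) : Prop :=
  forall n (A : set Omega) (y : X) (t : R), history_sigma x T n A ->
    P (A `&` [set w | x n.+1 w = y /\ T n.+1 w - T n w <= t]) =
    (\int[P]_(w in A) (Q (x n w) y t)%:E)%E.

(** N(t) = sup {n : T_n <= t}  (the maximum, which exists when the set is
    bounded, as is the case on the restricted Omega). *)
Definition Ncount (R : realType) (Omega : Type) (T : nat -> Omega -> R)
    (t : R) (w : Omega) : nat :=
  xget 0%N [set n | T n w <= t /\ forall m, T m w <= t -> (m <= n)%N].

Definition xproc (R : realType) (Omega : Type) (X : finType)
    (x : nat -> Omega -> X) (T : nat -> Omega -> R) (t : R) (w : Omega) : X :=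
  x (Ncount T t w) w.

Definition Nst (R : realType) (Omega : Type) (T : nat -> Omega -> R)
    (s t : R) (w : Omega) : nat :=
  (Ncount T t w - Ncount T s w)%N.

Definition Ts (R : realType) (Omega : Type) (T : nat -> Omega -> R)
    (s : R) (n : nat) (w : Omega) : R :=
  if n is 0 then s else T (Ncount T s w + n)%N w.

Definition xs (R : realType) (Omega : Type) (X : finType)
    (x : nat -> Omega -> X) (T : nat -> Omega -> R) (s : R) (n : nat)
    (w : Omega) : X :=
  xproc x T (Ts T s n w) w.

(** The inhomogeneous random evolution, applied to f:
    V(s,t) f = [prod_{k=1}^{N_s(t)} Gamma_{x_{k-1}(s)}(T_{k-1}(s),T_k(s))
                 D(x_{k-1}(s),x_k(s))] Gamma_{x(t)}(T_{N_s(t)}(s),t) f,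
    the product being ordered left to right. *)
Definition random_evolution (R : realType) (Y : normedModType R) (Omega : Type)
    (X : finType) (x : nat -> Omega -> X) (T : nat -> Omega -> R)
    (Gam : X -> R -> R -> Y -> Y) (Dop : X -> X -> Y -> Y)
    (s t : R) (w : Omega) (f : Y) : Y :=
  let n := Nst T s t w in
  foldr (fun k g =>
           Gam (xs x T s k.-1 w) (Ts T s k.-1 w) (Ts T s k w)
               (Dop (xs x T s k.-1 w) (xs x T s k w) g))
        (Gam (xproc x T t w) (Ts T s n w) t f)
        (iota 1 n).

Definition null_sets (R : realType) (d : measure_display)
    (Omega : measurableType d) (P : probability Omega R) : set (set Omega) :=
  [set A | exists B, [/\ measurable B, P B = 0%E & A `<=` B]].

Definition augmented_filtration (R : realType) (d : measure_display)
    (Omega : measurableType d) (P : probability Omega R) (X : finType)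
    (x : nat -> Omega -> X) (T : nat -> Omega -> R) (s t : R) : set (set Omega) :=
  <<s [set A | exists n : nat,
         (exists S : set X,
            A = (fun w => xs x T s (minn n (Nst T s t w)) w) @^-1` S) \/
         (exists B : set R, measurable B /\
            A = (fun w => Ts T s (minn n (Nst T s t w)) w) @^-1` B)]
      `|` null_sets P >>.

(* Main.v *)
Require Import Defs.
From HB Require Import structures.
From mathcomp Require Import all_boot all_order all_algebra.
From mathcomp Require Import all_classical all_reals all_analysis.
Import Order.TTheory GRing.Theory Num.Theory numFieldNormedType.Exports.

Local Open Scope classical_set_scope.
Local Open Scope ring_scope.

Section Ncnt.
Variables (R : realType) (Om : Type) (T : nat -> Om -> R).
Hypothesis Tmono : forall w m n, (m < n)%N -> T m w < T n w.
Hypothesis T0 : forall w, T 0%N w = 0.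
Hypothesis Tfin : forall w (t : R), exists M : nat, forall n, T n w <= t -> (n <= M)%N.

Lemma Ncount_spec t w : 0 <= t ->
  T (Ncount T t w) w <= t /\ forall m, T m w <= t -> (m <= Ncount T t w)%N.
Proof.
move=> t0; rewrite /Ncount.
set P := [set n | _].
suff : exists n, P n by move=> /(xgetPex 0%N).
have ex : exists n, (fun n => T n w <= t) n by exists 0%N; rewrite T0.
have [M HM] := Tfin w t.
case: (ex_maxnP ex HM) => n Hn Hmax.
by exists n; split.
Qed.

Lemma Tle_mono w m n : (m <= n)%N -> T m w <= T n w.
Proof. by rewrite leq_eqVlt => /orP[/eqP->//|/Tmono/ltW]. Qed.

Lemma Ncount_iff t w n : 0 <= t -> (T n w <= t) = (n <= Ncount T t w)%N.
Proof.
move=> t0; have [h1 h2] := Ncount_spec _ w t0.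
apply/idP/idP; first exact: h2.
by move=> /(Tle_mono w) /le_trans; apply.
Qed.

Lemma T_ge0 w n : 0 <= T n w.
Proof. by rewrite -(T0 w); apply: Tle_mono. Qed.

Lemma Ncount_mono s t w : 0 <= s -> s <= t -> (Ncount T s w <= Ncount T t w)%N.
Proof.
move=> s0 st; rewrite -Ncount_iff ?(le_trans s0)//.
by apply: le_trans st; have [] := Ncount_spec _ w s0.
Qed.

Lemma Ncount_T n w : Ncount T (T n w) w = n.
Proof.
have [h1 h2] := Ncount_spec _ w (T_ge0 w n).
apply/eqP; rewrite eqn_leq (h2 n (lexx _)) andbT.
rewrite leqNgt; apply/negP => /(Tmono w); rewrite ltNge.
by rewrite h1.
Qed.
End Ncnt.
Arguments Ncount_spec {R Om T}. Arguments Tle_mono {R Om T}. Arguments Ncount_iff {R Om T}.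
Arguments T_ge0 {R Om T}. Arguments Ncount_mono {R Om T}. Arguments Ncount_T {R Om T}.
Section TsFacts.
Variables (R : realType) (Om : Type) (X : finType) (x : nat -> Om -> X) (T : nat -> Om -> R).
Hypothesis Tmono : forall w m n, (m < n)%N -> T m w < T n w.
Hypothesis T0 : forall w, T 0%N w = 0.
Hypothesis Tfin : forall w (t : R), exists M : nat, forall n, T n w <= t -> (n <= M)%N.
Variables (s t : R).
Hypothesis s0 : 0 <= s.
Hypothesis st : s <= t.

Let t0 : 0 <= t. Proof. exact: le_trans st. Qed.

Lemma Nst_add w : (Ncount T s w + Nst T s t w)%N = Ncount T t w.
Proof. by rewrite /Nst subnKC // (Ncount_mono Tmono T0 Tfin). Qed.

Lemma s_lt_T k w : (0 < k)%N -> s < T (Ncount T s w + k)%N w.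
Proof.
move=> k0; rewrite ltNge (Ncount_iff Tmono T0 Tfin _ _ _ s0).
by rewrite -ltnNge -addn1 leq_add2l.
Qed.

Lemma Ts_bounds k w : (k <= Nst T s t w)%N -> s <= Ts T s k w <= t.
Proof.
case: k => [|k] /= hk; first by rewrite lexx st.
rewrite ltW ?s_lt_T //= (Ncount_iff Tmono T0 Tfin _ _ _ t0) -(Nst_add w).
by rewrite leq_add2l.
Qed.

Lemma Ts_lt k w : (k < Nst T s t w)%N -> Ts T s k w < Ts T s k.+1 w.
Proof.
case: k => [|k] hk /=; first exact: s_lt_T.
by apply: Tmono; rewrite ltn_add2l.
Qed.

Lemma xproc_Nst w : xproc x T t w = xs x T s (Nst T s t w) w.
Proof.
rewrite /xs /xproc.
case E: (Nst T s t w) => [|n] /=.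
  by move: (Nst_add w); rewrite E addn0 => ->.
by rewrite -E Nst_add (Ncount_T Tmono T0).
Qed.
End TsFacts.
Arguments Nst_add {R Om T}. Arguments s_lt_T {R Om T}. Arguments Ts_bounds {R Om T}.
Arguments Ts_lt {R Om T}. Arguments xproc_Nst {R Om X x T}.
Section Meas.
Variables (d : measure_display) (M : measurableType d).

Lemma preimage_gen {Z : Type} (D : set Z) (G : set (set Z)) (phi : M -> Z) :
  (forall w, D (phi w)) -> (forall A, G A -> measurable (phi @^-1` A)) ->
  forall A, <<s D, G >> A -> measurable (phi @^-1` A).
Proof.
move=> hD hG A; apply: (smallest_sub (X := [set A | measurable (phi @^-1` A)])) => //.
split => /=.
- by rewrite preimage_set0.
- move=> B hB.
  have -> : phi @^-1` (D `\` B) = ~` (phi @^-1` B).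
    by apply/seteqP; split => w /=; [case | split; [exact: hD|]].
  exact: measurableC.
- by move=> F hF; rewrite preimage_bigcup; exact: bigcupT_measurable.
Qed.
End Meas.
Section Meas2.
Variables (d : measure_display) (M : measurableType d).
Variables (R : realType) (Y : normedModType R) (X : finType).

Definition Ymeas (g : M -> Y) := forall C, borel_sets C -> measurable (g @^-1` C).
Definition Xmeas (g : M -> X) := forall S : set X, measurable (g @^-1` S).
Definition Rmeas (g : M -> R) := forall B : set R, measurable B -> measurable (g @^-1` B).

Lemma Gam_meas (J : set R) (Gam : X -> R -> R -> Y -> Y)
  (hG : semigroup_family_measurable J Gam) s (Js : J s)
  (r u : M -> R) (xz : M -> X) (g : M -> Y) :
  (forall w, Jfrom J s (r w)) -> (forall w, Jfrom J s (u w)) ->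
  (forall w, r w <= u w) -> Rmeas r -> Rmeas u -> Xmeas xz -> Ymeas g ->
  Ymeas (fun w => Gam (xz w) (r w) (u w) (g w)).
Proof.
move=> hr hu hru mr mu mx mg C hC.
have := hG s Js C hC => /=.
set Dom := [set z | _]; set Gen := [set A | _].
move=> /(@preimage_gen _ M _ _ _ (fun w => (r w, u w, xz w, g w))).
have -> : (fun w => (r w, u w, xz w, g w)) @^-1`
   (Dom `&` [set z | C (Gam z.1.2 (Num.min z.1.1.1 z.1.1.2) (Num.max z.1.1.1 z.1.1.2) z.2)])
   = (fun w => Gam (xz w) (r w) (u w) (g w)) @^-1` C.
  apply/seteqP; split => w /=; rewrite (min_idPl (hru w)) (max_idPr (hru w)).
    by case.
  by move=> h; split => //; split; [exact: hr | exact: hu].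
apply.
  by move=> w; split; [exact: hr | exact: hu].
move=> A [A1 [A2 [S [B [[mA1 _] [mA2 _] hB ->]]]]].
have -> : (fun w => (r w, u w, xz w, g w)) @^-1`
   [set z | A1 z.1.1.1 /\ A2 z.1.1.2 /\ S z.1.2 /\ B z.2] =
   r @^-1` A1 `&` (u @^-1` A2 `&` (xz @^-1` S `&` g @^-1` B)) by [].
by apply: measurableI; [exact: mr | apply: measurableI; [exact: mu | apply: measurableI; [exact: mx | exact: mg]]].
Qed.

Lemma Dop_meas (Dop : X -> X -> Y -> Y) (hD : jump_family_measurable Dop)
  (x1 x2 : M -> X) (g : M -> Y) :
  Xmeas x1 -> Xmeas x2 -> Ymeas g -> Ymeas (fun w => Dop (x1 w) (x2 w) (g w)).
Proof.
move=> m1 m2 mg C hC.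
have := hD C hC.
move=> /(@preimage_gen _ M _ _ _ (fun w => (x1 w, x2 w, g w))); apply => //.
move=> A [S1 [S2 [B [hB ->]]]].
have -> : (fun w => (x1 w, x2 w, g w)) @^-1` [set z | S1 z.1.1 /\ S2 z.1.2 /\ B z.2] =
   x1 @^-1` S1 `&` (x2 @^-1` S2 `&` g @^-1` B) by [].
by apply: measurableI; [exact: m1 | apply: measurableI; [exact: m2 | exact: mg]].
Qed.
End Meas2.
Arguments Ymeas {d M R Y}. Arguments Xmeas {d M X}. Arguments Rmeas {d M R}.
Arguments Gam_meas {d M R Y X}. Arguments Dop_meas {d M R Y X}.
Lemma foldr_eq_in {A : eqType} {B : Type} (F1 F2 : A -> B -> B) (b : B) (l : seq A) :
  (forall a, a \in l -> forall g, F1 a g = F2 a g) -> foldr F1 b l = foldr F2 b l.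
Proof.
elim: l => //= a l IH h; rewrite h ?mem_head // IH // => a' ha'.
by apply: h; rewrite in_cons ha' orbT.
Qed.

Theorem proposition3p2
  (R : realType) (Y : completeNormedModType R)
  (J : set R)
  (hJ : J = [set t | 0 <= t] \/ exists Tinf : R, J = [set t | 0 <= t <= Tinf])
  (hYsep : separable_space Y)
  (d : measure_display) (Omega : measurableType d) (P : probability Omega R)
  (hPcomplete : measure_is_complete P)
  (X : finType)
  (x : nat -> Omega -> X) (tau : nat -> Omega -> R)
  (hx_meas : forall n (S : set X), measurable (x n @^-1` S))
  (htau_meas : forall n, measurable_fun setT (tau n))
  (htau0 : forall w, tau 0%N w = 0)
  (htau_pos : forall n w, (0 < n)%N -> 0 < tau n w)
  (Q : X -> X -> R -> R) (hQ : semi_Markov_kernel Q)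
  (hMRP : markov_renewal P x (Tsum tau) Q)
  (hNfinite : forall w (t : R), exists M : nat,
      forall n, Tsum tau n w <= t -> (n <= M)%N)
  (Gam : X -> R -> R -> Y -> Y)
  (hGam : forall z, inhom_semigroup J (Gam z))
  (hGam_meas : semigroup_family_measurable J Gam)
  (Dop : X -> X -> Y -> Y)
  (hDop : forall z1 z2, bounded_linear (Dop z1 z2))
  (hDop_contr : forall z1 z2 (f : Y), `|Dop z1 z2 f| <= `|f|)
  (hDop_meas : jump_family_measurable Dop) :
  forall s, J s -> forall (f : Y) (t : R), Jfrom J s t ->
  forall C : set Y, borel_sets C ->
    augmented_filtration P x (Tsum tau) s t
      ((fun w => random_evolution x (Tsum tau) Gam Dop s t w f) @^-1` C).
Proof.
move=> s Js f t [Jt st] C hC.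
set T := Tsum tau.
have T0 : forall w, T 0%N w = 0 by move=> w; rewrite /T /Tsum big_nat1.
have TS : forall n w, T n w < T n.+1 w.
  move=> n w; rewrite /T /Tsum (big_nat_recr n.+1) //=.
  by rewrite ltrDl htau_pos.
have Tmono : forall w m n, (m < n)%N -> T m w < T n w.
  move=> w m; elim => // n IH; rewrite ltnS leq_eqVlt => /orP[/eqP->|/IH h].
    exact: TS.
  exact: lt_trans h (TS _ _).
have s0 : 0 <= s by case: hJ Js => [->|[Ti ->]] //= /andP[].
have inJ : forall a, s <= a <= t -> Jfrom J s a.
  move=> a /andP[sa at_]; split => //.
  case: hJ Jt => [-> /= _|[Ti -> /= /andP[_ tT]]]; first exact: le_trans sa.
  by rewrite (le_trans s0 sa) (le_trans at_ tT).
rewrite /augmented_filtration.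
set G := (X in <<s X >>).
pose M := g_sigma_algebraType G.
change (@measurable _ M ((fun w => random_evolution x T Gam Dop s t w f) @^-1` C)).
pose N (w : M) := Nst T s t w.
pose Ts' k (w : M) := Ts T s (minn k (Nst T s t w)) w.
pose xs' k (w : M) := xs x T s (minn k (Nst T s t w)) w.
have mTs : forall k, Rmeas (Ts' k).
  move=> k B mB; apply: sub_sigma_algebra; left; exists k; right; by exists B.
have mxs : forall k, Xmeas (xs' k).
  move=> k S; apply: sub_sigma_algebra; left; exists k; left; by exists S.
have Tsb : forall k w, s <= Ts' k w <= t.
  by move=> k w; apply: (Ts_bounds Tmono T0 hNfinite s t s0 st); exact: geq_minr.
have Tsle : forall i j w, (i <= j <= Nst T s t w)%N -> Ts T s i w <= Ts T s j w.
  move=> i j w; elim: j => [|j IH]; first by rewrite leqn0 => /andP[/eqP->].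
  move=> /andP[]; rewrite leq_eqVlt => /orP[/eqP->//|]; rewrite ltnS => ij jn.
  have h1 : Ts T s i w <= Ts T s j w by apply: IH; rewrite ij ltnW.
  

  exact: le_trans h1 (ltW (Ts_lt Tmono T0 hNfinite s t s0 _ _ jn)).
have Tsmono : forall a b w, (a <= b)%N -> Ts' a w <= Ts' b w.
  move=> a b w ab; apply: Tsle; rewrite geq_minr andbT.
  by rewrite leq_min geq_minr (leq_trans (geq_minl _ _) ab).
have mcR : forall c : R, Rmeas (fun _ : M => c).
  move=> c B mB; have [Bc|nBc] := pselect (B c).
    by have -> : (fun _ : M => c) @^-1` B = setT by apply/seteqP; split.
  have -> : (fun _ : M => c) @^-1` B = set0 by apply/seteqP; split.
  exact: measurable0.
have mcY : forall c : Y, Ymeas (fun _ : M => c).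
  move=> c B mB; have [Bc|nBc] := pselect (B c).
    by have -> : (fun _ : M => c) @^-1` B = setT by apply/seteqP; split.
  have -> : (fun _ : M => c) @^-1` B = set0 by apply/seteqP; split.
  exact: measurable0.
pose Fk w k g := Gam (xs' k.-1 w) (Ts' k.-1 w) (Ts' k w) (Dop (xs' k.-1 w) (xs' k w) g).
have mfold : forall (l : seq nat) (b : M -> Y), Ymeas b ->
    Ymeas (fun w => foldr (Fk w) (b w) l).
  elim => //= k l IH b mb.
  apply: (Gam_meas J Gam hGam_meas s Js (Ts' k.-1) (Ts' k) (xs' k.-1)
    (fun w => Dop (xs' k.-1 w) (xs' k w) (foldr (Fk w) (b w) l))).
  - by move=> w; apply: inJ.
  - by move=> w; apply: inJ.
  - by move=> w; apply: Tsmono; exact: leq_pred.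
  - exact: mTs.
  - exact: mTs.
  - exact: mxs.
  - by apply: (Dop_meas Dop hDop_meas); [exact: mxs | exact: mxs | exact: IH].
pose Vm m w := foldr (Fk w) (Gam (xs' m w) (Ts' m w) t f) (iota 1 m).
have mVm : forall m, Ymeas (Vm m).
  move=> m; apply: mfold.
  apply: (Gam_meas J Gam hGam_meas s Js (Ts' m) (fun _ => t) (xs' m) (fun _ => f)).
  - by move=> w; apply: inJ.
  - by move=> w; apply: inJ; rewrite st lexx.
  - by move=> w; have /andP[] := Tsb m w.
  - exact: mTs.
  - exact: mcR.
  - exact: mxs.
  - exact: mcY.
have mfTs : forall k, measurable_fun setT (Ts' k).
  by move=> k _ B mB; rewrite setTI; exact: mTs.
have mge : forall k, measurable [set w : M | (k <= Nst T s t w)%N].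
  case=> [|k].
    by have -> : [set w : M | (0 <= Nst T s t w)%N] = setT by apply/seteqP; split.
  have -> : [set w : M | (k.+1 <= Nst T s t w)%N] =
      (fun w => Ts' k.+1 w - Ts' k w) @^-1` `]0, +oo[%classic.
    apply/seteqP; split => w /=.
      move=> hk; rewrite in_itv /= andbT subr_gt0 /Ts'.
      rewrite (minn_idPl (ltnW hk)) (minn_idPl hk).
      exact: (Ts_lt Tmono T0 hNfinite s t s0 _ _ hk).
    rewrite in_itv /= andbT subr_gt0 /Ts'; case: (ltnP k (Nst T s t w)) => // hk.
    by rewrite (minn_idPr (leqW hk)) ltxx.
  have := measurable_realfun.measurable_funB (mfTs k.+1) (mfTs k) measurableT (measurable_itv `]0, +oo[).
  by rewrite setTI.
have V_eq : forall w, random_evolution x T Gam Dop s t w f = Vm (Nst T s t w) w.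
  move=> w; rewrite /random_evolution (xproc_Nst Tmono T0 hNfinite s t s0 st w) /=.
  rewrite /Vm /xs' /Ts' minnn; apply: foldr_eq_in => a.
  rewrite mem_iota add1n ltnS => /andP[a1 an] g.
  rewrite /Fk /xs' /Ts' (minn_idPl an) (minn_idPl (leq_trans (leq_pred a) an)).
  by [].
have -> : (fun w => random_evolution x T Gam Dop s t w f) @^-1` C =
    \bigcup_m (([set w : M | (m <= Nst T s t w)%N] `\` [set w : M | (m.+1 <= Nst T s t w)%N])
       `&` (Vm m) @^-1` C).
  apply/seteqP; split => w /=.
    rewrite V_eq => hw; exists (Nst T s t w) => //=; split => //; split => //.
    by rewrite ltnn.
  move=> [m _ [[h1 h2] h3]]; rewrite V_eq.
  have -> : Nst T s t w = m.
    by apply/eqP; rewrite eqn_leq h1 andbT leqNgt; apply/negP.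
  exact: h3.
apply: bigcupT_measurable => m; apply: measurableI.
  exact: measurableD.
exact: mVm.
Qed.
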